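(* Let $(X,\{R_i\}_{i=0}^d)$ be a symmetric association scheme with adjacency matrices $A_0=I,\dots,A_d$ and intersection numbers $p_{ij}^k$, and let $W=\sum_{i=0}^dw_iA_i$ with $w_0=1$ be a complex Hadamard matrix. If $|X|\geq3$, then \[ H_3(W)=\{1\}\cup\left\{\left(\frac{w_iw_j}{w_k}\right)^{\pm1}\;\middle|\;1\leq i,j,k\leq d,\ p_{ij}^k>0\right\}. \]
   Context: An association scheme $(X,\{R_i\}_{i=0}^d)$ is a partition of $X\times X$ into relations $R_0=\{(x,x)\}$, $R_1,\dots,R_d$ such that for $(x,y)\in R_k$ the number $p_{ij}^k=|\{z\in X:(x,z)\in R_i,(z,y)\in R_j\}|$ depends only on $i,j,k$; it is symmetric if each $R_i$ is symmetric. $A_i$ is the $(0,1)$-matrix indexed by $X$ of $R_i$. A complex Hadamard matrix is a square complex matrix $H$ of order $n=|X|$ with entries of absolute value $1$ and $HH^*=nI$. For $W$ indexed by $X$, \[ H_3(W)=\left\{\frac{W_{x_1,y_1}W_{x_2,y_2}}{W_{x_2,y_1}W_{x_1,y_2}}\;\middle|\;x_1,x_2,y_1,y_2\in X,\ |\{x_1,x_2,y_1,y_2\}|=3\right\}. \] *)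

(* Defs.v *)
(* Complex numbers: an arbitrary numClosedFieldType C
   (e.g. algC, or complex R for a real closed field R). *)
From HB Require Import structures.
From mathcomp Require Import all_boot all_order all_algebra.
Set Implicit Arguments. Unset Strict Implicit. Unset Printing Implicit Defensive.
Import Order.TTheory GRing.Theory Num.Theory.
Local Open Scope ring_scope.

(* An association scheme with classes R_0,...,R_d on the finite set X is
   encoded by the map r : X -> X -> 'I_d.+1 sending (x,y) to the index i
   with (x,y) in R_i. *)
Definition is_assoc_scheme (X : finType) (d : nat) (r : X -> X -> 'I_d.+1) : Prop :=
  (forall x y, (r x y == ord0) = (x == y)) /\
  (forall i : 'I_d.+1, exists x y, r x y = i) /\
  (* p_{ij}^k is well defined *)
  (forall (i j k : 'I_d.+1) (x y x' y' : X), r x y = k -> r x' y' = k ->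
     #|[set z | (r x z == i) && (r z y == j)]| =
     #|[set z | (r x' z == i) && (r z y' == j)]|).

Definition is_symmetric_scheme (X : finType) (d : nat) (r : X -> X -> 'I_d.+1) : Prop :=
  is_assoc_scheme r /\ forall x y, r x y = r y x.

Definition pnum (X : finType) (d : nat) (r : X -> X -> 'I_d.+1) (i j k : 'I_d.+1) : nat :=
  match [pick xy : X * X | r xy.1 xy.2 == k] with
  | Some xy => #|[set z | (r xy.1 z == i) && (r z xy.2 == j)]|
  | None => 0%N
  end.

Definition adj (C : numClosedFieldType) (X : finType) (d : nat)
  (r : X -> X -> 'I_d.+1) (i : 'I_d.+1) : X -> X -> C :=
  fun x y => (r x y == i)%:R.

Definition schemeW (C : numClosedFieldType) (X : finType) (d : nat)
  (r : X -> X -> 'I_d.+1) (w : 'I_d.+1 -> C) : X -> X -> C :=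
  fun x y => \sum_(i < d.+1) w i * adj C r i x y.

Definition is_complex_hadamard (C : numClosedFieldType) (X : finType)
  (W : X -> X -> C) : Prop :=
  (forall x y, `|W x y| = 1) /\
  (forall x y, \sum_(z : X) W x z * (W y z)^* = (x == y)%:R * #|X|%:R).

Definition in_H3 (C : numClosedFieldType) (X : finType) (W : X -> X -> C) (c : C) : Prop :=
  exists x1 x2 y1 y2 : X, #|[set x1; x2; y1; y2]| = 3%N /\
    c = W x1 y1 * W x2 y2 / (W x2 y1 * W x1 y2).

(* Main.v *)
Require Import Defs.
From HB Require Import structures.
From mathcomp Require Import all_boot all_order all_algebra.
Import Order.TTheory GRing.Theory Num.Theory.
Local Open Scope ring_scope.
Set Implicit Arguments. Unset Strict Implicit.

Section S.
Variables (C : numClosedFieldType) (X : finType) (d : nat)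
  (r : X -> X -> 'I_d.+1) (w : 'I_d.+1 -> C).

Lemma schemeWE x y : schemeW r w x y = w (r x y).
Proof.
rewrite /schemeW (bigD1 (r x y)) //= /adj eqxx mulr1 big1 ?addr0 // => i hi.
by rewrite eq_sym (negbTE hi) mulr0.
Qed.

Lemma card4 (a b e f : X) : #|[set a; b; e; f]| =
  ((~~ [|| a == b, a == e | a == f]) + ((~~ ((b == e) || (b == f))) + ((e != f) + 1)))%N.
Proof.
have -> : [set a; b; e; f] = a |: (b |: [set e; f]).
  by apply/setP => z; rewrite !inE !orbA.
by rewrite !cardsU1 cards1 !inE.
Qed.

Lemma ex_notin (A : {set X}) : (#|A| < #|X|)%N -> exists z, z \notin A.
Proof.
move=> h; case: (boolP [exists z, z \notin A]) => [/existsP//|].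
rewrite negb_exists => /forallP H.
have eA : A = setT by apply/setP => z; rewrite inE; have := H z; rewrite negbK.
by rewrite eA cardsT ltnn in h.
Qed.

Hypothesis Hs : is_symmetric_scheme r.
Hypothesis hw0 : w ord0 = 1.
Hypothesis hw : forall i, w i != 0.

Lemma rxx x : r x x = ord0.
Proof. by case: Hs => [[H _] _]; apply/eqP; rewrite H. Qed.

Lemma posr x y : x != y -> (0 < r x y)%N.
Proof.
case: Hs => [[H _] _] nxy; rewrite lt0n; apply: contra nxy => /eqP h.
by rewrite -H; apply/eqP/val_inj.
Qed.

Lemma pnum_pos x y z : (0 < pnum r (r x z) (r z y) (r x y))%N.
Proof.
case: Hs => [[_ [_ Hp]] _]; rewrite /pnum; case: pickP => [[a b] /= /eqP hab|H].
  rewrite (Hp _ _ _ a b x y hab erefl); apply/card_gt0P; exists z.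
  by rewrite inE !eqxx.
by have := H (x, y); rewrite /= eqxx.
Qed.

Lemma neq_of_pos x y : (0 < r x y)%N -> x != y.
Proof. by apply: contraTneq => ->; rewrite rxx. Qed.

Definition RHS (c : C) := (c = 1 \/
     exists i j k : 'I_d.+1,
       [/\ (0 < i)%N, (0 < j)%N, (0 < k)%N, (0 < pnum r i j k)%N &
           (c = w i * w j / w k \/ c = (w i * w j / w k)^-1)]).

Lemma fwd_core a b e c : b != a -> a != e -> b != e ->
  (c = w (r b a) * w (r a e) / w (r b e) \/ c = (w (r b a) * w (r a e) / w (r b e))^-1) -> RHS c.
Proof.
move=> ba ae be hc; right; exists (r b a), (r a e), (r b e); split => //;
  by [apply: posr | apply: pnum_pos].
Qed.
End S.

Unset Implicit Arguments. Set Strict Implicit.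

Theorem lemma5p1 (C : numClosedFieldType) (X : finType) (d : nat)
  (r : X -> X -> 'I_d.+1) (w : 'I_d.+1 -> C) :
  is_symmetric_scheme r ->
  w ord0 = 1 ->
  is_complex_hadamard (schemeW r w) ->
  (3 <= #|X|)%N ->
  forall c : C,
    in_H3 (schemeW r w) c <->
    (c = 1 \/
     exists i j k : 'I_d.+1,
       [/\ (0 < i)%N, (0 < j)%N, (0 < k)%N, (0 < pnum r i j k)%N &
           (c = w i * w j / w k \/ c = (w i * w j / w k)^-1)]).
Proof.
move=> Hs hw0 [Hn _] h3 c.
have hw : forall i, w i != 0.
  move=> i; case: Hs => [[_ [Hne _]] _]; have [x [y <-]] := Hne i.
  by rewrite -(schemeWE r w) -normr_eq0 Hn oner_eq0.
have hW : forall x y, w (r x y) != 0 by [].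
split.
  move=> [x1 [x2 [y1 [y2 [Hc ->]]]]]; rewrite !schemeWE; rewrite card4 in Hc.
  case: (eqVneq x1 x2) => [<-|n12].
    by left; rewrite divff // mulf_neq0.
  case: (eqVneq y1 y2) => [<-|n34].
    by left; rewrite [X in _ / X]mulrC divff // mulf_neq0.
  case: (eqVneq x1 y1) => [e13|n13].
    subst y1; have n24 : x2 != y2.
      by apply/eqP => e; move: Hc; rewrite e !(eqxx, orbT, orTb) n34.
    apply: (@fwd_core _ _ _ r w Hs x1 x2 y2) => //; try by rewrite eq_sym.
    by right; rewrite (rxx Hs) hw0 mul1r invf_div.
  case: (eqVneq x1 y2) => [e14|n14].
    subst y2; have n23 : x2 != y1.
      apply/eqP => e; move: Hc; by rewrite e !(eqxx, orbT, orTb); case: (y1 != x1).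
    apply: (@fwd_core _ _ _ r w Hs x1 x2 y1) => //; try by rewrite eq_sym.
    by left; rewrite (rxx Hs) hw0 mulr1 [w (r x1 y1) * _]mulrC.
  case: (eqVneq x2 y1) => [e23|n23].
    subst y1.
    apply: (@fwd_core _ _ _ r w Hs x2 x1 y2) => //.
    by left; rewrite (rxx Hs) hw0 mul1r.
  case: (eqVneq x2 y2) => [e24|n24].
    subst y2.
    apply: (@fwd_core _ _ _ r w Hs x2 x1 y1) => //; try by rewrite eq_sym.
    by right; rewrite (rxx Hs) hw0 mulr1 invf_div [w (r x2 y1) * _]mulrC.
  by move: Hc; rewrite (negbTE n12) (negbTE n13) (negbTE n14) (negbTE n23) (negbTE n24) n34.
case=> [->|[i [j [k [pi pj pk pp hc]]]]].
  have [x _] : exists z, z \notin (set0 : {set X}).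
    by apply: ex_notin; rewrite cards0 (leq_trans _ h3).
  have [y Hy] : exists z, z \notin [set x].
    by apply: ex_notin; rewrite cards1 (leq_trans _ h3).
  have [z Hz] : exists z, z \notin [set x; y].
    by apply: ex_notin; rewrite cards2 (leq_trans _ h3) //; case: (x != y).
  move: Hy Hz; rewrite !inE negb_or => Hy /andP [Hzx Hzy].
  exists x, x, y, z; split.
    by rewrite card4 !eqxx /= (eq_sym x y) (eq_sym x z) (eq_sym y z) (negbTE Hy) (negbTE Hzx) Hzy.
  by rewrite !schemeWE divff // mulf_neq0.
move: pp; rewrite /pnum; case: pickP => [[a b] /= /eqP hab|]; last by [].
move=> /card_gt0P [z]; rewrite inE => /andP [/eqP hi /eqP hj].
have naz : a != z by apply: (neq_of_pos Hs); rewrite hi.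
have nzb : z != b by apply: (neq_of_pos Hs); rewrite hj.
have nab : a != b by apply: (neq_of_pos Hs); rewrite hab.
case: hc => ->.
  exists z, a, b, z; split.
    by rewrite card4 !eqxx /= ?[z == a]eq_sym ?[b == a]eq_sym ?[b == z]eq_sym ?(negbTE naz) ?(negbTE nzb) ?(negbTE nab) ?naz ?nzb ?nab.
  by rewrite !schemeWE hab hi hj (rxx Hs) hw0 mulr1 (mulrC (w j)).
exists z, a, z, b; split.
  by rewrite card4 !eqxx /= ?[z == a]eq_sym ?[b == a]eq_sym ?[b == z]eq_sym ?(negbTE naz) ?(negbTE nzb) ?(negbTE nab) ?naz ?nzb ?nab.
by rewrite !schemeWE hab hi hj (rxx Hs) hw0 mul1r invf_div.
Qed.
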